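(* Assume the setting in the context, with a decomposition of $\mathcal X$ over $A$, $g\in\mathcal G_s$ and an integer $T>0$. Let $\mathcal V$ be any subspace of $\mathcal U$ with $\mathcal U=\big(\bigoplus_{i\in\mathcal I}\mathcal E_i\big)\oplus\mathcal V$. If $\{(A,B|_{\mathcal E_i},g,T)\}_{i\in\mathcal I}$ is a decomposition (Definition 1) of $(A,B,g,T)$, then $A(\mathcal X)\cap B(\mathcal V)=\{0\}$.
   Context: Let $\mathcal F$ be a field and $\mathcal X,\mathcal U$ finite-dimensional vector spaces over $\mathcal F$. Let $A:\mathcal X\to\mathcal X$ and $B:\mathcal U\to\mathcal X$ be linear maps with $B$ injective, and consider $x_{t+1}=Ax_t+Bu_t$ and a cost $g:\mathcal X\to\mathbb R_{\ge0}$ with $g(x)=0\iff x=0$. Standing assumption: all minima appearing below are attained. Finite-horizon problem $(A,B,g,T)$: policies $\pi(x_0)=(\pi_t(x_0))_{t=0}^{T-1}\in\mathcal U^T$, cost $J(x_0,\pi)=\sum_{t=0}^Tg(x_t)$ with $x_{t+1}=Ax_t+B\pi_t(x_0)$; $J^*(x_0)=\min_\pi J(x_0,\pi)$; minimizing policies are optimal. A decomposition of $\mathcal X$ over $A$ is a direct sum $\mathcal X=\mathcal X_1\oplus\cdots\oplus\mathcal X_r$ with $r>1$ and $A\mathcal X_i\subseteq\mathcal X_i$, $i\in\mathcal I=\{1,\dots,r\}$; $\rho_i:\mathcal X\to\mathcal X_i$ is the projection along the other summands. $\mathcal G_s$ is the set of $h:\mathcal X\to\mathbb R_{\ge0}$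 with $h(x)=\sum_i h(\rho_i(x))$ for all $x$. $\mathcal E_i=\{u\in\mathcal U:Bu\in\mathcal X_i\}$ (the sum of the $\mathcal E_i$ is direct since $B$ is injective). Subproblem $(A,B|_{\mathcal E_i},g,T)$: same problem for $x_{i,t+1}=Ax_{i,t}+B\bar u_{i,t}$ with states in $\mathcal X_i$ and inputs in $\mathcal E_i$; optimal cost $\bar J_i^*$, optimal policies $\bar\pi_i^*$. Definition 1: the family is a decomposition of $(A,B,g,T)$ if for every $x$: $J^*(x)=\sum_i\bar J_i^*(\rho_i(x))$, and for every choice of optimal policies $\bar\pi_i^*(\rho_i(x))$ there is an optimal policy $\pi^*(x)$ with $\pi^*(x)=\sum_i\bar\pi_i^*(\rho_i(x))$. *)

(* Defs.v *)
From HB Require Import structures.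
From mathcomp Require Import all_boot all_order all_algebra.
Set Implicit Arguments. Unset Strict Implicit. Unset Printing Implicit Defensive.
Import Order.TTheory GRing.Theory Num.Theory.
Local Open Scope ring_scope.

Section Control.
Variables (F : fieldType) (X U : vectType F) (R : realFieldType).
Variables (A : 'End(X)) (B : 'Hom(U, X)) (g : X -> R) (T : nat).

Fixpoint traj (x0 : X) (u : nat -> U) (t : nat) : X :=
  match t with
  | 0 => x0
  | t'.+1 => A (traj x0 u t') + B (u t')
  end.

(* J(x0, u) = sum_{t=0}^T g(x_t); only u_0 .. u_{T-1} matter *)
Definition cost (x0 : X) (u : nat -> U) : R :=
  \sum_(t < T.+1) g (traj x0 u t).

Definition optimal (x0 : X) (u : nat -> U) : Prop :=
  forall u' : nat -> U, cost x0 u <= cost x0 u'.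

Definition sub_optimal (E : {vspace U}) (x0 : X) (u : nat -> U) : Prop :=
  (forall t, (t < T)%N -> u t \in E) /\
  forall u' : nat -> U, (forall t, (t < T)%N -> u' t \in E) ->
    cost x0 u <= cost x0 u'.

End Control.

Definition Einp (F : fieldType) (X U : vectType F) (B : 'Hom(U, X))
  (Xi : {vspace X}) : {vspace U} := (B @^-1: Xi)%VS.

(* J*(x) = sum_i Jbar_i*(rho_i x)   (values of minima, attained),
   and every family of subproblem-optimal inputs sums to an optimal input. *)
Definition is_problem_decomposition (F : fieldType) (X U : vectType F)
  (R : realFieldType) (A : 'End(X)) (B : 'Hom(U, X)) (g : X -> R) (T : nat)
  (r : nat) (Xs : 'I_r -> {vspace X}) (rho : 'I_r -> X -> X) : Prop :=
  forall x : X,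
    (forall u : nat -> U, optimal A B g T x u ->
      forall us : 'I_r -> nat -> U,
        (forall i, sub_optimal A B g T (Einp B (Xs i)) (rho i x) (us i)) ->
        cost A B g T x u = \sum_(i < r) cost A B g T (rho i x) (us i))
    /\
    (forall us : 'I_r -> nat -> U,
        (forall i, sub_optimal A B g T (Einp B (Xs i)) (rho i x) (us i)) ->
        optimal A B g T x (fun t => \sum_(i < r) us i t)).

(* Main.v *)
Require Import Defs.
From HB Require Import structures.
From mathcomp Require Import all_boot all_order all_algebra.
Import Order.TTheory GRing.Theory Num.Theory.
Local Open Scope ring_scope.
From mathcomp Require Import zify.

From Stdlib Require Import IndefiniteDescription.

Lemma cost_ge (F : fieldType) (X U : vectType F) (R : realFieldType)
  (A : 'End(X)) (B : 'Hom(U, X)) (g : X -> R) (T : nat)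
  (Hg0 : forall x, 0 <= g x) (HT : (0 < T)%N) x u :
  g x + g (traj A B x u 1) <= cost A B g T x u.
Proof.
case: T HT => // T' _.
rewrite /cost !big_ord_recl /= addrA lerDl.
by apply: sumr_ge0 => i _.
Qed.

Theorem proposition5 (F : fieldType) (X U : vectType F) (R : realFieldType)
  (A : 'End(X)) (B : 'Hom(U, X)) (g : X -> R) (T r : nat)
  (Xs : 'I_r -> {vspace X}) (rho : 'I_r -> X -> X) (V : {vspace U})
  (* B injective *)
  (HB : lker B = 0%VS)
  (* decomposition of X over A *)
  (Hr : (1 < r)%N)
  (Hdir : directv (\sum_(i < r) Xs i)%VS)
  (Hfull : (\sum_(i < r) Xs i)%VS = fullv)
  (Hinv : forall i, (A @: Xs i <= Xs i)%VS)
  (* rho i = projection onto Xs i along the other summands *)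
  (Hrho_in : forall i x, rho i x \in Xs i)
  (Hrho_sum : forall x, x = \sum_(i < r) rho i x)
  (* cost g : X -> R_{>=0}, g x = 0 <-> x = 0, and g in G_s *)
  (Hg0 : forall x, 0 <= g x)
  (Hgz : forall x, g x = 0 <-> x = 0)
  (Hgs : forall x, g x = \sum_(i < r) g (rho i x))
  (HT : (0 < T)%N)
  (* U = (+)_i E_i (+) V : directness stated via dimensions (what directv
     unfolds to) to keep the E_i atomic *)
  (HVdir : \dim (\sum_(i < r) Einp B (Xs i) + V)%VS
            = (\sum_(i < r) \dim (Einp B (Xs i)) + \dim V)%N)
  (HVfull : (\sum_(i < r) Einp B (Xs i) + V)%VS = fullv)
  (* standing assumption: all minima are attained *)
  (Hatt : forall x, exists u, optimal A B g T x u)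
  (Hatt_sub : forall i x, x \in Xs i ->
     exists u, sub_optimal A B g T (Einp B (Xs i)) x u)
  (* Definition 1 holds *)
  (Hdec : is_problem_decomposition A B g T Xs rho) :
  (limg A :&: (B @: V))%VS = 0%VS.
Proof.
apply/eqP; rewrite -subv0; apply/subvP => y.
rewrite memv_cap => /andP[/memv_imgP [x0 _ Hy1] /memv_imgP [v Hv Hy2]].
rewrite memv0.
have g00 : g 0 = 0 by apply/Hgz.
pose u := fun t : nat => if t == 0%N then - v else 0.
have Htr : forall t, (0 < t)%N -> traj A B x0 u t = 0.
  elim=> // [[|t]] IH _.
    by rewrite /= /u /= linearN /= -Hy1 -Hy2 subrr.
  change (A (traj A B x0 u t.+1) + B (u t.+1) = 0).
  by rewrite IH // linear0 /u /= linear0 addr0.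
have Hcu : cost A B g T x0 u = g x0.
  rewrite /cost big_ord_recl big1 ?addr0 // => i _.
  by rewrite Htr ?g00.
have Hopt : optimal A B g T x0 u.
  move=> u'; rewrite Hcu /cost big_ord_recl lerDl.
  by apply: sumr_ge0.
pose us := fun i => proj1_sig (constructive_indefinite_description _
   (Hatt_sub i (rho i x0) (Hrho_in i x0))).
have Hus : forall i, sub_optimal A B g T (Einp B (Xs i)) (rho i x0) (us i).
  by move=> i; rewrite /us; case: constructive_indefinite_description.
have Heq := (Hdec x0).1 u Hopt us Hus.
rewrite Hcu (Hgs x0) in Heq.
have Hd : \sum_(i < r) (cost A B g T (rho i x0) (us i) - g (rho i x0)) = 0.
  by rewrite sumrB -Heq subrr.
have Hge : forall i, g (traj A B (rho i x0) (us i) 1) <=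
     cost A B g T (rho i x0) (us i) - g (rho i x0).
  by move=> i; rewrite lerBrDl; apply: cost_ge.
have H0 := psumr_eq0P (fun i _ => le_trans (Hg0 _) (Hge i)) Hd.
have Hz : forall i, A (rho i x0) + B (us i 0%N) = 0.
  move=> i; apply/Hgz; apply/le_anti; rewrite Hg0 andbT.
  by have := Hge i; rewrite H0.
have HAx : A x0 = - B (\sum_(i < r) us i 0%N).
  rewrite {1}(Hrho_sum x0) !linear_sum; apply: eq_bigr => i _ /=.
  by apply/eqP; rewrite -subr_eq0 opprK Hz.
have Hvw : v = - \sum_(i < r) us i 0%N.
  apply/eqP; rewrite -subr_eq0 opprK.
  have : v + \sum_(i < r) us i 0%N \in lker B.
    by rewrite memv_ker linearD /= -Hy2 Hy1 HAx addNr.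
  by rewrite HB memv0.
set S := (\sum_(i < r) Einp B (Xs i))%VS in HVdir HVfull.
have HvS : v \in S.
  rewrite Hvw memvN; apply: memv_sumr => i _.
  by have [] := Hus i; move=> /(_ 0%N HT).
have Hcap : (S :&: V)%VS = 0%VS.
  apply/eqP; rewrite -dimv_eq0; apply/eqP.
  have h1 := dimv_sum_cap S V.
  have h2 : (\dim S <= \sum_(i < r) \dim (Einp B (Xs i)))%N by apply: dimv_leq_sum.
  lia.
have : v \in (S :&: V)%VS by rewrite memv_cap HvS Hv.
by rewrite Hcap memv0 Hy2 => /eqP ->; rewrite linear0.
Qed.
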